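(* Let $\mathbf{V}\in\mathbb{R}^{n\times(k+1)}$ have orthonormal columns and suppose $\mathbf{W}\in\mathbb{R}^{k\times(k+1)}$ satisfies $$\max_{i\in[n]}\Big\{\min_{l\in[k]}\|\mathbf{V}_{i,:}-\mathbf{W}_{l,:}\|\Big\}=\epsilon.$$ Then $\epsilon\ge(3n(k+1)^2)^{-1}$.
   Context: $[n]=\{1,\dots,n\}$; $\|\cdot\|$ is the Euclidean norm; $\mathbf{V}_{i,:}$ denotes the $i$-th row of $\mathbf{V}$. *)

(* Defs.v *)
From HB Require Import structures.
From mathcomp Require Import all_boot all_order all_algebra.
From mathcomp Require Import reals.
Set Implicit Arguments. Unset Strict Implicit. Unset Printing Implicit Defensive.
Import Order.TTheory GRing.Theory Num.Theory.
Local Open Scope ring_scope.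

Definition rnorm (R : realType) (m : nat) (v : 'rV[R]_m) : R :=
  Num.sqrt (\sum_(j < m) v 0 j ^+ 2).

Definition rowdist (R : realType) (n k m : nat) (V : 'M[R]_(n, m)) (W : 'M[R]_(k, m))
  (i : 'I_n) (l : 'I_k) : R := rnorm (row i V - row l W).

(* min_{l in [k]} ||V_i - W_l||.  The seed of the iterated min is the maximum of the
   same (nonnegative) distances, so for k > 0 the result is exactly the minimum. *)
Definition mindist (R : realType) (n k m : nat) (V : 'M[R]_(n, m)) (W : 'M[R]_(k, m))
  (i : 'I_n) : R :=
  let seed := (\big[Num.max/0]_(l < k) rowdist V W i l) in
  \big[Num.min/seed]_(l < k) rowdist V W i l.

(* max_{i in [n]} min_l ||V_i - W_l||; seed 0 is harmless since distances are >= 0 *)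
Definition maxmindist (R : realType) (n k m : nat) (V : 'M[R]_(n, m)) (W : 'M[R]_(k, m)) : R :=
  \big[Num.max/0]_(i < n) mindist V W i.

(* Main.v *)
Require Import Defs.
From HB Require Import structures.
From mathcomp Require Import all_boot all_order all_algebra.
From mathcomp Require Import reals ring lra zify.
Import Order.TTheory GRing.Theory Num.Theory.
Local Open Scope ring_scope.
Lemma cs (R : realFieldType) (m : nat) (a b : 'I_m -> R) :
  (\sum_i a i * b i) ^+ 2 <= (\sum_i a i ^+ 2) * (\sum_i b i ^+ 2).
Proof.
have E : forall i j, (a i * b j - a j * b i) ^+ 2 =
   a i ^+ 2 * b j ^+ 2 + b i ^+ 2 * a j ^+ 2 - 2 * (a i * b i) * (a j * b j).
  by move=> i j; ring.
have H : 0 <= \sum_i \sum_j (a i * b j - a j * b i) ^+ 2.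
  by apply: sumr_ge0 => i _; apply: sumr_ge0 => j _; apply: sqr_ge0.
move: H.
under eq_bigr do under eq_bigr do rewrite E.
under eq_bigr do rewrite sumrB big_split /= -!mulr_sumr.
rewrite sumrB big_split /= -!mulr_suml -mulr_sumr. set A := \sum_i a i ^+ 2. set B := \sum_i b i ^+ 2. set C := \sum_i a i * b i. nra.
Qed.

Theorem corollary7 (R : realType) (n k : nat) (V : 'M[R]_(n, k.+1))
  (W : 'M[R]_(k, k.+1)) (eps : R) :
  (0 < k)%N ->
  V^T *m V = 1%:M ->
  maxmindist V W = eps ->
  eps >= (3 * n%:R * (k.+1)%:R ^+ 2)^-1.
Proof.
move=> k0 HV Heps.
have rd0 : forall i l, 0 <= rowdist V W i l by move=> i l; exact: sqrtr_ge0.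
have eps0 : 0 <= eps.
  by rewrite -Heps; exact: bigmax_ge_id.
have [c [c0 Wc]] : exists c : 'cV[R]_(k.+1), c != 0 /\ W *m c = 0.
  set K := kermx W^T.
  have HK : K != 0.
    rewrite -mxrank_eq0 /K mxrank_ker.
    by rewrite subn_eq0 -leqNgt rank_leq_col.
  have : ~~ [forall i, forall j, K i j == 0].
    apply: contra HK => /forallP H; apply/eqP/matrixP => i j.
    by move/forallP: (H i) => /(_ j) /eqP ->; rewrite mxE.
  rewrite negb_forall => /existsP [i]; rewrite negb_forall => /existsP [j Hij].
  exists (row i K)^T; split.
    apply: contraNneq Hij => /matrixP /(_ j 0).
    by rewrite !mxE => ->.
  by rewrite -[W]trmxK -trmx_mul -row_mul mulmx_ker row0 trmx0.
have near : forall i, exists l, rowdist V W i l <= eps.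
  move=> i.
  have hm : mindist V W i <= eps.
    by rewrite -Heps /maxmindist; exact: (le_bigmax _ (fun i => mindist V W i)).
  have : exists l, rowdist V W i l <= mindist V W i.
    rewrite /mindist; apply: (big_ind (fun x => exists l, rowdist V W i l <= x)).
    - by exists (Ordinal k0); exact: (le_bigmax _ (fun l => rowdist V W i l)).
    - move=> x y [l1 h1] [l2 h2]; rewrite /Order.min; case: ifP => _; [exists l1|exists l2] => //.
    - by move=> l _; exists l.
  by move=> [l hl]; exists l; exact: le_trans hl hm.
set s := \sum_j c j 0 ^+ 2.
have s0 : 0 < s.
  rewrite lt_def sumr_ge0 ?andbT; last by move=> j _; exact: sqr_ge0.
  apply: contra c0 => /eqP hs; apply/eqP/matrixP => j z.
  rewrite (ord1 z) mxE; apply/eqP; rewrite -sqrf_eq0; apply/eqP.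
  exact: (psumr_eq0P (fun j _ => sqr_ge0 (c j 0)) hs).
set y := V *m c.
have Hy : \sum_i y i 0 ^+ 2 = s.
  have : (y^T *m y) 0 0 = (c^T *m c) 0 0.
    by rewrite /y trmx_mul -mulmxA (mulmxA V^T) HV mul1mx.
  rewrite !mxE => E; rewrite /s.
  transitivity (\sum_j y^T 0 j * y j 0). apply: eq_bigr => j _. by rewrite expr2 [y^T 0 j]mxE.
  by rewrite E; apply: eq_bigr => j _; rewrite expr2 mxE.
have Hi : forall i, y i 0 ^+ 2 <= eps ^+ 2 * s.
  move=> i; have [l hl] := near i.
  have -> : y i 0 = \sum_j (V i j - W l j) * c j 0.
    have : (W *m c) l 0 = 0 by rewrite Wc mxE.
    rewrite mxE => E0.
    rewrite /y mxE; under [RHS]eq_bigr do rewrite mulrBl. by rewrite sumrB E0 subr0.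
  apply: le_trans (cs _ _ (fun j => V i j - W l j) (fun j => c j 0)) _; apply: ler_wpM2r; first exact: ltW.
  have hsum : 0 <= \sum_j (V i j - W l j) ^+ 2 by apply: sumr_ge0 => j _; exact: sqr_ge0.
  have -> : \sum_j (V i j - W l j) ^+ 2 = rowdist V W i l ^+ 2.
    rewrite /rowdist /rnorm sqr_sqrtr; last first.
      by apply: sumr_ge0 => j _; exact: sqr_ge0.
    by apply: eq_bigr => j _; rewrite !mxE.
  by rewrite !expr2; apply: ler_pM.
have Hn : s <= n%:R * eps ^+ 2 * s.
  rewrite -{1}Hy; apply: le_trans (ler_sum _ (fun i _ => Hi i)) _.
  by rewrite big_const_ord iter_addr_0 -[X in X <= _]mulr_natl !mulrA.
have H1 : 1 <= n%:R * eps ^+ 2.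
  by rewrite -(ler_pM2r s0) mul1r.
have N1 : 1 <= n%:R :> R.
  have nn0 : n != 0%N by apply/eqP => n0; move: H1; rewrite n0 mul0r ler10.
  by rewrite ler1n lt0n.
have K1 : 1 <= (k.+1)%:R :> R by rewrite ler1n.
have P : 0 < 3 * n%:R * (k.+1)%:R ^+ 2 :> R.
  by rewrite !mulr_gt0 ?exprn_gt0 //; apply: lt_le_trans N1.
rewrite -[X in X <= _]mulr1 ler_pdivrMl //.
have H2 : 1 <= n%:R * eps :> R.
  case: (lerP eps 1) => he.
    apply: le_trans H1 _; rewrite ler_pM2l; last by apply: lt_le_trans N1.
    by rewrite expr2; rewrite -[X in _ <= X]mulr1; apply: ler_wpM2l.
  apply: (le_trans N1); rewrite -[X in X <= _]mulr1; apply: ler_wpM2l (ltW he).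
  by apply: le_trans ler01 N1.
set N := n%:R in N1 H1 H2 P *. set K := (k.+1)%:R in K1 P *.
nra.
Qed.
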